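(* Let $T\in U(n,1)$ be unipotent (parabolic) and $S\in U(n,1)$ elliptic. Then $ST=TS$ if and only if $T(\mathrm{fix}(S))=\mathrm{fix}(S)$ and $S(\mathrm{fix}(T))=\mathrm{fix}(T)$.
   Context: $U(n,1)$ is the unitary group of a Hermitian form of signature $(n,1)$ on $\mathbb{C}^{n+1}$; it acts on complex hyperbolic space $H^n_{\mathbb{C}}$ (projectivized negative vectors) and its closure $\overline{H^n_{\mathbb{C}}}$ (adding projectivized null vectors). For $g\in U(n,1)$, $\mathrm{fix}(g)$ is the set of points of $\overline{H^n_{\mathbb{C}}}$ fixed by $g$. An element is elliptic if it fixes a point of $H^n_{\mathbb{C}}$. *)

(* Defs.v *)
From HB Require Import structures.
From mathcomp Require Import all_boot all_order all_algebra.
From mathcomp Require Import complex.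
From mathcomp Require Import reals classical_sets.
Set Implicit Arguments. Unset Strict Implicit. Unset Printing Implicit Defensive.
Import Order.TTheory GRing.Theory Num.Theory.
Local Open Scope ring_scope.
Local Open Scope classical_set_scope.

Definition Jmx (R : realType) (n : nat) : 'M[R[i]]_(n.+1) :=
  diag_mx (\row_(i < n.+1) if (i : nat) == n then -1 else 1).

Definition herm (R : realType) (n : nat) (z w : 'cV[R[i]]_(n.+1)) : R[i] :=
  ((map_mx Num.conj w)^T *m Jmx R n *m z) ord0 ord0.

Definition Un1 (R : realType) (n : nat) : set 'M[R[i]]_(n.+1) :=
  [set A | (map_mx Num.conj A)^T *m Jmx R n *m A = Jmx R n].

(* Points of the closure of complex hyperbolic space, represented by
   (all) their homogeneous coordinate vectors: nonzero z with <z,z> <= 0.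
   z represents a point of H^n_C iff <z,z> < 0. *)
Definition closedHvec (R : realType) (n : nat) : set 'cV[R[i]]_(n.+1) :=
  [set z | z != 0 /\ herm z z <= 0].

(* g fixes the point [z] iff z is an eigenvector of g. fix g is represented
   by the (scalar-saturated) set of all representatives of fixed points. *)
Definition fixpts (R : realType) (n : nat) (g : 'M[R[i]]_(n.+1))
  : set 'cV[R[i]]_(n.+1) :=
  [set z | @closedHvec R n z /\ exists l : R[i], g *m z = l *: z].

Definition act_image (R : realType) (n : nat) (g : 'M[R[i]]_(n.+1))
  (F : set 'cV[R[i]]_(n.+1)) : set 'cV[R[i]]_(n.+1) :=
  (fun z => g *m z) @` F.

Definition elliptic (R : realType) (n : nat) (g : 'M[R[i]]_(n.+1)) : Prop :=
  @Un1 R n g /\ exists z : 'cV[R[i]]_(n.+1),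
    z != 0 /\ herm z z < 0 /\ exists l : R[i], g *m z = l *: z.

Definition unipotent (R : realType) (n : nat) (g : 'M[R[i]]_(n.+1)) : Prop :=
  @Un1 R n g /\ exists k : nat, (g - 1) ^+ k = 0.

(* Main.v *)
Require Import Defs.
From HB Require Import structures.
From mathcomp Require Import all_boot all_order all_algebra.
From mathcomp Require Import complex.
From mathcomp Require Import reals classical_sets.
From mathcomp Require Import ring.
Import Order.TTheory GRing.Theory Num.Theory.
Local Open Scope ring_scope.

Section S.
Set Implicit Arguments. Unset Strict Implicit. Unset Printing Implicit Defensive.
Variables (R : realType) (n : nat).
Local Notation C := (R[i]).
Local Notation J := (Jmx R n).
Local Notation adj A := (map_mx Num.conj A)^T.

Lemma adjM p q r (A : 'M[C]_(p, q)) (B : 'M[C]_(q, r)) : adj (A *m B) = adj B *m adj A.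
Proof. by rewrite map_mxM trmx_mul. Qed.

Lemma adjK p q (A : 'M[C]_(p, q)) : adj (adj A) = A.
Proof. by rewrite map_trmx trmxK; apply/matrixP => i j; rewrite !mxE conjCK. Qed.

Lemma adjD p q (A B : 'M[C]_(p, q)) : adj (A + B) = adj A + adj B.
Proof. by apply/matrixP => i j; rewrite !mxE rmorphD. Qed.

Lemma adjN p q (A : 'M[C]_(p, q)) : adj (- A) = - adj A.
Proof. by apply/matrixP => i j; rewrite !mxE rmorphN. Qed.

Lemma adjZ p q c (A : 'M[C]_(p, q)) : adj (c *: A) = c^* *: adj A.
Proof. by apply/matrixP => i j; rewrite !mxE rmorphM. Qed.

Lemma adj1 : adj (1%:M : 'M[C]_(n.+1)) = 1%:M.
Proof. by apply/matrixP => i j; rewrite !mxE rmorph_nat eq_sym. Qed.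

Lemma adjJ : adj J = J.
Proof.
apply/matrixP => i j; rewrite !mxE rmorphMn (eq_sym j i); case: (eqVneq i j) => [->|_]; rewrite ?mulr0n ?rmorph0 // !mulr1n.
by case: ifP; rewrite ?rmorphN rmorph1.
Qed.

Lemma JJ : J *m J = 1%:M.
Proof.
rewrite mulmx_diag; apply/matrixP => i j; rewrite !mxE.
by case: ifP; rewrite ?mulN1r ?opprK ?mulr1.
Qed.


Local Notation herm := (@herm R n).
Implicit Types z w : 'cV[C]_(n.+1).

Lemma hermDl z1 z2 w : herm (z1 + z2) w = herm z1 w + herm z2 w.
Proof. by rewrite /herm mulmxDr mxE. Qed.
Lemma hermZl c z w : herm (c *: z) w = c * herm z w.
Proof. by rewrite /herm -scalemxAr mxE. Qed.
Lemma hermNl z w : herm (- z) w = - herm z w.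
Proof. by rewrite -scaleN1r hermZl mulN1r. Qed.
Lemma hermBl z1 z2 w : herm (z1 - z2) w = herm z1 w - herm z2 w.
Proof. by rewrite hermDl hermNl. Qed.
Lemma herm0l w : herm 0 w = 0.
Proof. by rewrite -(scale0r 0) hermZl mul0r. Qed.



Lemma hermE z w : herm z w =
  \sum_i (w i 0)^* * (if (i : nat) == n then -1 else 1) * z i 0.
Proof.
rewrite /herm mxE; apply: eq_bigr => i _; rewrite mul_mx_diag !mxE.
by congr (_ * _ * _); apply: congr1; apply: val_inj.
Qed.

Lemma herm_sym z w : herm w z = (herm z w)^*.
Proof.
rewrite !hermE rmorph_sum; apply: eq_bigr => i _.
rewrite !rmorphM /= conjCK.
have -> : (if (i : nat) == n then -1 else 1 : C)^* = (if (i:nat) == n then -1 else 1).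
  by case: ifP; rewrite ?rmorphN rmorph1.
by rewrite mulrC mulrA -!mulrA [X in _ * X = _]mulrC.
Qed.

Lemma hermDr z w1 w2 : herm z (w1 + w2) = herm z w1 + herm z w2.
Proof. by rewrite herm_sym hermDl rmorphD /= -!herm_sym. Qed.
Lemma hermZr c z w : herm z (c *: w) = c^* * herm z w.
Proof. by rewrite herm_sym hermZl rmorphM /= -!herm_sym. Qed.

Lemma herm_unit (A : 'M[C]_(n.+1)) z w : Un1 A -> herm (A *m z) (A *m w) = herm z w.
Proof.
rewrite /Un1 /= => HA; rewrite /herm adjM -!mulmxA (mulmxA (adj A)) (mulmxA (adj A *m J)).
by rewrite HA.
Qed.




Lemma hermBr z w1 w2 : herm z (w1 - w2) = herm z w1 - herm z w2.
Proof. by rewrite -scaleN1r hermDr hermZr rmorphN rmorph1 mulN1r. Qed.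

Definition wo (i : 'I_n) : 'I_n.+1 := widen_ord (leqnSn n) i.

Lemma hermzz z : herm z z =
  \sum_(i < n) (z (wo i) 0 * (z (wo i) 0)^*) - z ord_max 0 * (z ord_max 0)^*.
Proof.
rewrite hermE big_ord_recr /= eqxx mulrN1 mulNr mulrC.
congr (_ - _); apply: eq_bigr => i _.
by rewrite /wo /= ltn_eqF // mulr1 mulrC.
Qed.

Lemma sum_ge0 z : 0 <= \sum_(i < n) (z (wo i) 0 * (z (wo i) 0)^*).
Proof. by apply: sumr_ge0 => i _; apply: mul_conjC_ge0. Qed.

Lemma neg2 {x y : C} : x <= 0 -> y <= 0 -> 0 <= x + y -> x = 0.
Proof.
move=> hx hy hxy; apply/le_anti; rewrite hx /=.
have : - y <= x by rewrite -subr_ge0 opprK.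
by apply: le_trans; rewrite oppr_ge0.
Qed.

Lemma ord_cases (i : 'I_n.+1) : i = ord_max \/ exists j, i = wo j.
Proof.
have := ltn_ord i; rewrite ltnS leq_eqVlt => /orP [/eqP e | lt].
  by left; apply: val_inj.
by right; exists (Ordinal lt); apply: val_inj.
Qed.

Lemma Lpos v y : herm v v < 0 -> herm y v = 0 -> herm y y <= 0 -> y = 0.
Proof.
move=> hv hyv hyy.
have hvy : herm v y = 0 by rewrite herm_sym hyv rmorph0.
set a := y ord_max 0; set b := v ord_max 0.
have bn0 : b != 0.
  apply: contraTneq hv => b0; rewrite hermzz -/b b0 mul0r subr0.
  by apply/negP => /(le_lt_trans (sum_ge0 v)); rewrite ltxx.
set c := b *: y - a *: v.
have hc : herm c c = b * b^* * herm y y + a * a^* * herm v v.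
  rewrite /c hermBl !hermBr !hermZl !hermZr hyv hvy !mulr0 subr0 sub0r opprK.
  by rewrite !mulrA (mulrC b).
have hc0 : 0 <= herm c c.
  rewrite hermzz.
  have -> : c ord_max 0 = 0 by rewrite /c !mxE -/a -/b mulrC subrr.
  by rewrite mul0r subr0 sum_ge0.
have h1 : b * b^* * herm y y <= 0 by apply: mulr_ge0_le0 => //; apply: mul_conjC_ge0.
have h2 : a * a^* * herm v v <= 0.
  by apply: mulr_ge0_le0; [apply: mul_conjC_ge0 | apply: ltW].
have e1 : b * b^* * herm y y = 0 by apply: (neg2 h1 h2); rewrite -hc.
have e2 : a * a^* * herm v v = 0.
  by apply: (neg2 h2 h1); rewrite addrC -hc.
have a0 : a = 0.
  apply/eqP; rewrite -mul_conjC_eq0; apply/eqP.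
  by move/eqP: e2; rewrite mulf_eq0 (lt_eqF hv) orbF => /eqP.
have yy0 : herm y y = 0.
  by move/eqP: e1; rewrite mulf_eq0 mul_conjC_eq0 (negbTE bn0) /= => /eqP.
move: yy0; rewrite hermzz -/a a0 mul0r subr0 => hs.
apply/matrixP => i j; rewrite (ord1 j) mxE.
case: (ord_cases i) => [->|[k ->]] //.
apply/eqP; rewrite -mul_conjC_eq0; apply/eqP.
by apply: (psumr_eq0P _ hs) => // l _; apply: mul_conjC_ge0.
Qed.


Lemma unitR (A : 'M[C]_(n.+1)) : Un1 A -> A *m (J *m adj A *m J) = 1%:M.
Proof.
rewrite /Un1 /= => HA; apply: mulmx1C.
by rewrite -!mulmxA (mulmxA (adj A)) HA JJ.
Qed.

Lemma inv_U (A : 'M[C]_(n.+1)) : Un1 A -> exists A' : 'M[C]_(n.+1),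
  [/\ A' *m A = 1%:M, A *m A' = 1%:M & Un1 A'].
Proof.
rewrite /Un1 /= => HA.
have h1 : (J *m adj A *m J) *m A = 1%:M by rewrite -!mulmxA (mulmxA (adj A)) HA JJ.
have h2 := mulmx1C h1.
exists (J *m adj A *m J); split => //.
rewrite /Un1 /= !adjM adjJ adjK.
have h3 : A *m J *m adj A = J.
  have e : A *m J *m adj A *m J = 1%:M by rewrite -h2 !mulmxA.
  by rewrite -[LHS]mulmx1 -JJ mulmxA e mul1mx.
have e : J *m A *m J *m J *m J *m adj A *m J = J *m (A *m J *m adj A) *m J.
  by rewrite -(mulmxA J A J) -(mulmxA _ J J) JJ mulmx1 !mulmxA.
by rewrite !mulmxA e h3 JJ mul1mx.
Qed.

Lemma pres (A A' B : 'M[C]_(n.+1)) (z : 'cV[C]_(n.+1)) : Un1 A -> A' *m A = 1%:M -> B *m A = A *m B ->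
  fixpts B z -> fixpts B (A *m z).
Proof.
move=> HA HA' hc [[zn0 hz] [l hl]]; split; first split.
- apply: contraNneq zn0 => h; by rewrite -(mul1mx z) -HA' -mulmxA h mulmx0.
- by rewrite herm_unit.
- by exists l; rewrite mulmxA hc -mulmxA hl scalemxAr.
Qed.

Lemma fwd (A B : 'M[C]_(n.+1)) : Un1 A -> B *m A = A *m B -> act_image A (fixpts B) = fixpts B.
Proof.
move=> HA hc; have [A' [h1 h2 HA']] := inv_U HA.
have hc' : B *m A' = A' *m B.
  by rewrite -[LHS]mul1mx -h1 -mulmxA (mulmxA A B A') -hc -(mulmxA B A A') h2 mulmx1.
rewrite eqEsubset; split.
- by move=> _ [z hz <-]; apply: (pres HA h1 hc hz).
- move=> w hw; exists (A' *m w); last by rewrite mulmxA h2 mul1mx.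
  exact: (pres HA' h2 hc' hw).
Qed.

Lemma colmx_eq (A B : 'M[C]_(n.+1)) : (forall z : 'cV[C]_(n.+1), A *m z = B *m z) -> A = B.
Proof.
move=> h; apply/matrixP => i j.
have := h (delta_mx j 0); rewrite -!colE => /(congr1 (fun M : 'cV[C]_(n.+1) => M i 0)).
by rewrite !mxE.
Qed.

Lemma bwd (T S : 'M[C]_(n.+1)) : unipotent T -> elliptic S ->
  act_image T (fixpts S) = fixpts S -> S *m T = T *m S.
Proof.
move=> [HT [k hk]] [HS [v [vn0 [hv [mu hSv]]]]] hfix.
have mu1 : mu * mu^* = 1.
  have := herm_unit v v HS; rewrite hSv hermZl hermZr mulrA => /eqP.
  rewrite -subr_eq0 -{2}(mul1r (herm v v)) -mulrBl mulf_eq0 (lt_eqF hv) orbF subr_eq0.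
  by move/eqP; rewrite mulrC.
pose P y := forall e, herm e e < 0 -> S *m e = mu *: e -> herm y e = 0.
have Pv y : P y -> herm y y <= 0 -> y = 0.
  by move=> Py; apply: (Lpos hv); apply: Py.
have PM z : P (S *m z - mu *: z).
  move=> e he hSe; rewrite hermBl hermZl.
  have := herm_unit z e HS; rewrite hSe hermZr => h.
  by rewrite -h mulrA mu1 mul1r subrr.
have PB y1 y2 : P y1 -> P y2 -> P (y1 - y2).
  by move=> h1 h2 e he hSe; rewrite hermBl h1 // h2 // subrr.
have PT y : P y -> P (T *m y).
  move=> Py e he hSe.
  have : fixpts S e.
    split; last by exists mu.
    split; last exact: ltW.
    by apply: contraTneq he => ->; rewrite herm0l ltxx.
  rewrite -hfix => -[z [[zn0 hzz] [l hSz]] hTz].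
  simpl in hTz; have hz : herm z z < 0 by rewrite -(herm_unit z z HT) hTz.
  have hzv : herm z v != 0.
    by apply: contra_neq zn0 => h; apply: (Lpos hv h hzz).
  have lmu : l = mu.
    have := herm_unit z v HS; rewrite hSz hSv hermZl hermZr mulrA => /eqP.
    rewrite -subr_eq0 -{2}(mul1r (herm z v)) -mulrBl mulf_eq0 (negbTE hzv) orbF subr_eq0.
    move/eqP => h; rewrite -[l]mulr1 -mu1 mulrA (mulrC l) -mulrA.
    by rewrite mulrC h mul1r.
  simpl in hTz; rewrite -hTz herm_unit //; apply: Py => //; by rewrite hSz lmu.
pose N := T - 1%:M.
have PN j y : P y -> P (N ^+ j *m y).
  move=> Py; elim: j => [|j IH]; first by rewrite expr0 mul1mx.
  rewrite exprS -mulmxE -mulmxA mulmxBl mul1mx; apply: PB => //; exact: PT.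
have step j : (forall y, P y -> N ^+ j.+2 *m y = 0) -> (forall y, P y -> N ^+ j.+1 *m y = 0).
  move=> hQ y Py; set x := N ^+ j *m y; set u := N *m x.
  have Px : P x by apply: PN.
  have hu : N ^+ j.+1 *m y = u by rewrite exprS -mulmxE -mulmxA.
  have Nu : N *m u = 0 by rewrite -hu mulmxA mulmxE -exprS; apply: hQ.
  have Tu : T *m u = u by move/eqP: Nu; rewrite mulmxBl mul1mx subr_eq0 => /eqP.
  have Tx : T *m x = x + u by rewrite /u mulmxBl mul1mx addrC subrK.
  have Pu : P u by rewrite /u mulmxBl mul1mx; apply: PB => //; apply: PT.
  have h1 := herm_unit x x HT; have h2 := herm_unit (T *m x) (T *m x) HT.
  rewrite Tx in h1; rewrite !Tx mulmxDr Tx Tu in h2.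
  have E : herm u u *+ 2 = (herm (x + u + u) (x + u + u) - herm x x)
      - (herm (x + u) (x + u) - herm x x) *+ 2.
    rewrite !hermDl !hermDr; ring.
  rewrite h2 h1 !subrr mul0rn subr0 in E.
  rewrite hu; apply: Pv => //.
  by move/eqP: E; rewrite mulrn_eq0 /= => /eqP ->.
have Q1 : forall y, P y -> N *m y = 0.
  suff H : forall d, (forall y, P y -> N ^+ d.+1 *m y = 0) -> forall y, P y -> N ^+ 1 *m y = 0.
    move=> y Py; rewrite -[N]expr1; apply: (H k) => // y' _.
    by rewrite exprSr hk mul0r mul0mx.
  elim=> [|d IH] // hd; apply: IH; exact: step.
have TP y : P y -> T *m y = y.
  by move=> Py; apply/eqP; rewrite -subr_eq0 -{2}(mul1mx y) -mulmxBl Q1.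
have hA : T *m (S - mu%:M) = S - mu%:M.
  apply: colmx_eq => z; rewrite -mulmxA TP // mulmxBl mul_scalar_mx; exact: PM.
set M := S - mu%:M in hA *.
have e1 : adj M *m J *m T = adj M *m J.
  by rewrite -{1}hA adjM -!mulmxA (mulmxA (adj T)) HT.
have e2 : adj M *m J *m (T - 1%:M) = 0 by rewrite mulmxBr mulmx1 e1 subrr.
have e3 : S *m J *m adj M *m J = 1%:M - mu^* *: S.
  rewrite /M -(scalemx1 _ mu) adjD adjN adjZ adj1 mulmxDr mulmxDl mulmxN mulNmx.
  rewrite -!mulmxA (mulmxA J (adj S)) unitR // -scalemxAl mul1mx -scalemxAr JJ.
  by rewrite -scalemxAr mulmx1.
have hB : (mu%:M - S) *m (T - 1%:M) = 0.
  have : (S *m J) *m (adj M *m J *m (T - 1%:M)) = 0 by rewrite e2 mulmx0.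
  rewrite !mulmxA e3 => /(congr1 (fun X => mu *: X)).
  by rewrite scaler0 scalemxAl scalerBr scalerA mu1 scale1r scalemx1.
move: hA hB; rewrite /M => hA hB.
rewrite mulmxBr mul_mx_scalar in hA.
rewrite mulmxBl !mulmxBr mul_scalar_mx mul_scalar_mx scalemx1 mulmx1 in hB.
move/eqP: hA; rewrite subr_eq => /eqP ->.
move/eqP: hB; rewrite subr_eq0 eq_sym subr_eq => /eqP ->.
by rewrite [LHS]addrAC [RHS]addrAC (addrC (mu *: T)).
Qed.

End S.

Local Open Scope classical_set_scope.

Theorem lemma3p5 (R : realType) (n : nat) (T S : 'M[R[i]]_(n.+1)) :
  unipotent T -> elliptic S ->
  (S *m T = T *m S <->
   (act_image T (fixpts S) = fixpts S /\ act_image S (fixpts T) = fixpts T)).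
Proof.
move=> hT hS; split.
- move=> hc; split; first exact: (fwd hT.1 hc).
  exact: (fwd hS.1 (esym hc)).
- by move=> [h _]; apply: bwd.
Qed.
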